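(* For every relational structure $\mathfrak{C}$ in which every relation symbol has arity at most $m$ (for some $m\in\mathbb N$) there exists a relational structure $\mathfrak{B}$ in which every relation symbol has arity at most $2$ such that $\mathfrak{B}$ and $\mathfrak{C}$ are primitively positively bi-interpretable. If the signature of $\mathfrak{C}$ is finite, then $\mathfrak{B}$ can be chosen to have a finite signature as well.
   Context: A primitive positive formula is an existentially quantified conjunction of atomic formulas (relational atoms, equalities, $\top$, $\bot$). A primitive positive (pp-) interpretation $I$ of a $\sigma$-structure $\mathfrak{B}$ in a $\tau$-structure $\mathfrak{A}$ of dimension $d$ consists of a pp $\tau$-formula $\delta_I(x_1,\dots,x_d)$, a pp $\tau$-formula $\phi_I$ for each atomic $\sigma$-formula $\phi$ (including equality), and a surjective coordinate map $h_I\colon D_I\to B$ with $D_I=\delta_I(\mathfrak{A})\subseteq A^d$ such that $\mathfrak{B}\models\phi(h_I(\bar a_1),\dots,h_I(\bar a_k))$ iff $\mathfrak{A}\models\phi_I(\bar a_1,\dots,\bar a_k)$ for all $\bar a_i\in D_I$. If $I_1$ is a $d_1$-dimensional pp-interpretation of $\mathfrak{C}_1$ in $\mathfrak{C}_2$ and $I_2$ a $d_2$-dimensional pp-interpretation of $\mathfrak{C}_2$ in $\mathfrak{C}_3$, the composition $I_1\circ I_2$ is the $d_1d_2$-dimensional pp-interpretation of $\mathfrak{C}_1$ in $\mathfrak{C}_3$ (with formulas obtained by replacing atomic $\tau_2$-formulas in the formulas of $I_1$ by their $I_2$-translations) whose coordinate map sends $(a^1_1,\dots,a^1_{d_2},\dots,a^{d_1}_1,\dots,a^{d_1}_{d_2})$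 to $h_{I_1}(h_{I_2}(a^1_1,\dots,a^1_{d_2}),\dots,h_{I_2}(a^{d_1}_1,\dots,a^{d_1}_{d_2}))$. Two pp-interpretations $I_1,I_2$ of $\mathfrak{B}$ in $\mathfrak{A}$ are homotopic if the relation $\{(\bar x,\bar y)\mid h_{I_1}(\bar x)=h_{I_2}(\bar y)\}$ is pp-definable in $\mathfrak{A}$. The identity interpretation of $\mathfrak{C}$ in $\mathfrak{C}$ is the 1-dimensional one with identity coordinate map. $\mathfrak{A}$ and $\mathfrak{B}$ are primitively positively bi-interpretable if there are pp-interpretations $I$ of $\mathfrak{B}$ in $\mathfrak{A}$ and $J$ of $\mathfrak{A}$ in $\mathfrak{B}$ such that $I\circ J$ and $J\circ I$ are homotopic to the respective identity interpretations. *)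

(* Defs.v *)
From mathcomp Require Import all_boot.
From Stdlib Require List.

Set Implicit Arguments.
Unset Strict Implicit.
Unset Printing Implicit Defensive.

(* A structure has an (arbitrary, possibly empty) domain and, for each symbol
   [s], a relation of arity [ar s], i.e. a predicate on [ar s]-tuples
   ('I_(ar s) -> dom). *)
Record structure (St : Type) (ar : St -> nat) : Type := Structure {
  dom : Type;
  rel : forall s : St, ('I_(ar s) -> dom) -> Prop
}.

Definition finite_sig (St : Type) : Prop := exists l : list St, forall s, List.In s l.

(* Atomic formulas are relational
   atoms, equalities, top and bottom; connectives are conjunction and
   existential quantification (which binds a fresh variable [None] of
   [option V]). *)
Inductive ppf (St : Type) (ar : St -> nat) : Type -> Type :=
  | PTop  (V : Type) : ppf ar V
  | PBot  (V : Type) : ppf ar V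
  | PAtom (V : Type) (s : St) (args : 'I_(ar s) -> V) : ppf ar V
  | PEq   (V : Type) (x y : V) : ppf ar V
  | PAnd  (V : Type) (f g : ppf ar V) : ppf ar V
  | PEx   (V : Type) (f : ppf ar (option V)) : ppf ar V.

Fixpoint sat (St : Type) (ar : St -> nat) (A : structure ar) (V : Type)
    (f : ppf ar V) : (V -> dom A) -> Prop :=
  match f in ppf _ V0 return (V0 -> dom A) -> Prop with
  | PTop _ => fun _ => True
  | PBot _ => fun _ => False
  | PAtom _ s args => fun e => @rel _ _ A s (fun j => e (args j))
  | PEq _ x y => fun e => e x = e y
  | PAnd _ f g => fun e => @sat _ _ A _ f e /\ @sat _ _ A _ g e
  | PEx _ f => fun e =>
      exists a : dom A,
        @sat _ _ A _ f (fun o => match o with Some v => e v | None => a end)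
  end.

Arguments sat {St ar} A {V} f _.
Arguments rel {St ar} s _ _ : rename.

(* A d-dimensional pp-interpretation of [B] (signature (Sb, arb)) in [A]
   (signature (Sa, ara)).  Tuples in A^d are functions 'I_d -> dom A.
   - [idelta] is the domain formula delta_I(x_1..x_d), D_I = delta_I(A);
   - [iphi s] is the formula for the atomic formula s(y_1,..,y_k)
     (k = arb s); its variables are pairs (j, i) = i-th coordinate of the
     j-th argument tuple;
   - [ieq] is the formula for the atomic formula y_1 = y_2; its variables are
     pairs (b, i), b = false for the first and b = true for the second tuple;
   - [imap] is the coordinate map h_I (only its values on D_I matter). *)
Record interp (Sa : Type) (ara : Sa -> nat) (Sb : Type) (arb : Sb -> nat)
    (A : structure ara) (B : structure arb) : Type := Interp {
  idim : nat;
  idelta : ppf ara 'I_idim;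
  iphi : forall s : Sb, ppf ara ('I_(arb s) * 'I_idim);
  ieq : ppf ara (bool * 'I_idim);
  imap : ('I_idim -> dom A) -> dom B;
  imap_surj : forall b : dom B, exists x, sat A idelta x /\ imap x = b;
  iphi_spec : forall (s : Sb) (x : 'I_(arb s) -> 'I_idim -> dom A),
      (forall j, sat A idelta (x j)) ->
      (@rel _ _ B s (fun j => imap (x j)) <->
       sat A (iphi s) (fun p => x p.1 p.2));
  ieq_spec : forall x y : 'I_idim -> dom A,
      sat A idelta x -> sat A idelta y ->
      (imap x = imap y <->
       sat A ieq (fun p => if p.1 then y p.2 else x p.2))
}.

Arguments idim {Sa ara Sb arb A B} i.
Arguments idelta {Sa ara Sb arb A B} i.
Arguments iphi {Sa ara Sb arb A B} i s.
Arguments ieq {Sa ara Sb arb A B} i.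
Arguments imap {Sa ara Sb arb A B} i _.

Definition pp_homotopic (Sa : Type) (ara : Sa -> nat) (A : structure ara)
    (T : Type) (X Y : Type)
    (D1 : (X -> dom A) -> Prop) (h1 : (X -> dom A) -> T)
    (D2 : (Y -> dom A) -> Prop) (h2 : (Y -> dom A) -> T) : Prop :=
  exists psi : ppf ara (X + Y),
    forall (x : X -> dom A) (y : Y -> dom A),
      sat A psi (fun v => match v with inl i => x i | inr j => y j end) <->
      (D1 x /\ D2 y /\ h1 x = h2 y).

Arguments pp_homotopic {Sa ara} A {T X Y} D1 h1 D2 h2.

(* For I1 a d1-dim interpretation of C1 in C2 and I2 a d2-dim interpretation
   of C2 in C3, the composite I1 o I2 is d1*d2-dimensional; its coordinates
   are indexed by pairs (i, k) : 'I_d1 * 'I_d2, (i,k) standing for a^i_k. *)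
Section Comp.
Variables (S1 S2 S3 : Type) (ar1 : S1 -> nat) (ar2 : S2 -> nat)
  (ar3 : S3 -> nat) (C1 : structure ar1) (C2 : structure ar2)
  (C3 : structure ar3).
Variables (I1 : interp C2 C1) (I2 : interp C3 C2).

Definition comp_dom (x : 'I_(idim I1) * 'I_(idim I2) -> dom C3) : Prop :=
  (forall i, sat C3 (idelta I2) (fun k => x (i, k))) /\
  sat C2 (idelta I1) (fun i => imap I2 (fun k => x (i, k))).

Definition comp_map (x : 'I_(idim I1) * 'I_(idim I2) -> dom C3) : dom C1 :=
  imap I1 (fun i => imap I2 (fun k => x (i, k))).
End Comp.
Arguments comp_dom {S1 S2 S3 ar1 ar2 ar3 C1 C2 C3} I1 I2 x.
Arguments comp_map {S1 S2 S3 ar1 ar2 ar3 C1 C2 C3} I1 I2 x.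

Definition id_dom (S : Type) (ar : S -> nat) (C : structure ar)
  (x : 'I_1 -> dom C) : Prop := True.
Definition id_map (S : Type) (ar : S -> nat) (C : structure ar)
  (x : 'I_1 -> dom C) : dom C := x ord0.

Definition pp_bi_interpretable (Sa : Type) (ara : Sa -> nat)
    (Sb : Type) (arb : Sb -> nat) (A : structure ara) (B : structure arb)
    : Prop :=
  exists (I : interp A B) (J : interp B A),
    pp_homotopic B (comp_dom I J) (comp_map I J) (@id_dom _ _ B) (@id_map _ _ B) /\
    pp_homotopic A (comp_dom J I) (comp_map J I) (@id_dom _ _ A) (@id_map _ _ A).

(* Main.v *)
Require Import Defs.
From mathcomp Require Import all_boot.
From Stdlib Require Import FunctionalExtensionality.

Set Implicit Arguments.
Unset Strict Implicit.
Unset Printing Implicit Defensive.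

Definition bigAnd (St : Type) (ar : St -> nat) (V : Type) (k : nat)
  (f : 'I_k -> ppf ar V) : ppf ar V :=
  foldr (fun i acc => PAnd (f i) acc) (PTop ar V) (enum 'I_k).

Lemma sat_bigAnd (St : Type) (ar : St -> nat) (A : structure ar) (V : Type) (k : nat)
  (f : 'I_k -> ppf ar V) (e : V -> dom A) :
  sat A (bigAnd f) e <-> forall i, sat A (f i) e.
Proof.
rewrite /bigAnd.
have H : forall s : seq 'I_k,
  sat A (foldr (fun i acc => PAnd (f i) acc) (PTop ar V) s) e <->
  (forall i, i \in s -> sat A (f i) e).
  elim=> [|a s IH] /=; first by split.
  split.
    move=> [Ha /IH Hs] i; rewrite inE => /orP [/eqP -> //|]; exact: Hs.
  move=> Hall; split; first by apply: Hall; rewrite inE eqxx.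
  apply/IH => i Hi; by apply: Hall; rewrite inE Hi orbT.
apply: iff_trans (H _) _; split=> Hh i; last by move=> _; exact: Hh.
by apply: Hh; rewrite mem_enum.
Qed.

Definition zcase (k : nat) : (k = 0) + (0 < k) :=
  match k with 0 => inl erefl | k'.+1 => inr isT end.

Definition ordabs (k : nat) (V : Type) (e : k = 0) (j : 'I_k) : V.
Proof. exfalso; move: (ltn_ord j); by rewrite [X in _ < X]e ltn0. Defined.

Lemma empty_fun (k : nat) (T : Type) (e : k = 0) (f g : 'I_k -> T) : f = g.
Proof. apply: functional_extensionality => j; exfalso; move: (ltn_ord j); by rewrite [X in _ < X]e ltn0. Qed.

Section Constr.
Variables (Sc : Type) (arc : Sc -> nat) (C : structure arc) (m : nat)
  (Hm : forall s : Sc, arc s <= m).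

Let n := m.+1.
Definition Sb := (Sc + Sc + ('I_n * 'I_n))%type.
Definition arb (s : Sb) : nat :=
  match s with inl (inl _) => 1 | inl (inr _) => 0 | inr _ => 2 end.
Definition wid (s : Sc) (j : 'I_(arc s)) : 'I_n := widen_ord (leqW (Hm s)) j.

Definition relB (s : Sb) : ('I_(arb s) -> ('I_n -> dom C)) -> Prop :=
  match s return ('I_(arb s) -> ('I_n -> dom C)) -> Prop with
  | inl (inl s) => fun a => Defs.rel C s (fun j => a ord0 (wid j))
  | inl (inr s) => fun a => arc s = 0 /\ exists t, Defs.rel C s t
  | inr (p, q) => fun a => a ord0 p = a ord_max q
  end.

Definition B : structure arb := @Structure Sb arb ('I_n -> dom C) relB.

Definition sel2 (V : Type) (u v : V) (k : 'I_2) : V := if val k == 0 then u else v.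

Definition phiI (s : Sc) : ppf arb ('I_(arc s) * 'I_1) :=
  match zcase (arc s) with
  | inl e => @PAtom Sb arb _ (inl (inr s)) (fun j : 'I_0 => @ordabs 0 _ (erefl 0) j)
  | inr _ => PEx (PAnd (@PAtom Sb arb _ (inl (inl s)) (fun _ => None))
       (bigAnd (fun j : 'I_(arc s) =>
          @PAtom Sb arb _ (inr (wid j, ord0)) (sel2 None (Some (j, ord0))))))
  end.

Definition eqI : ppf arb (bool * 'I_1) :=
  @PAtom Sb arb _ (inr (ord0, ord0)) (sel2 (false, ord0) (true, ord0)).

Definition I : interp B C.
Proof.
refine (@Interp _ _ _ _ B C 1 (PTop _ _) phiI eqI
  (fun x => x ord0 ord0) _ _ _).
- move=> b; exists (fun _ _ => b); done.
- move=> s x _; rewrite /phiI /=.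
  destruct (zcase (arc s)) as [e|h]; simpl.
    split; first by move=> H; split=> //; eexists; exact: H.
    move=> [_ [t Ht]]; by rewrite (empty_fun e (fun j => x j ord0 ord0) t).
  split.
    move=> H.
    pose j0 : 'I_(arc s) := Ordinal h.
    exists (fun k => x (insubd j0 (val k)) ord0 ord0) => /=; split.
      have -> : (fun j => x (insubd j0 (val (wid j))) ord0 ord0) =
                (fun j => x j ord0 ord0).
        apply: functional_extensionality => j; congr (x _ _ _).
        by apply: val_inj; rewrite val_insubd /= ltn_ord.
      exact: H.
    apply/sat_bigAnd => j /=; rewrite /sel2 /=.
    congr (x _ _ _); by apply: val_inj; rewrite val_insubd /= ltn_ord.
  move=> [a [Ha /sat_bigAnd Hj]].
  have -> : (fun j => x j ord0 ord0) = (fun j => a (wid j)).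
    apply: functional_extensionality => j; have := Hj j; rewrite /= /sel2 /=.
    by move=> ->.
  exact: Ha.
- move=> x y _ _; rewrite /eqI /= /sel2 /=; done.
Defined.

Definition phiJ (s : Sb) : ppf arc ('I_(arb s) * 'I_n) :=
  match s return ppf arc ('I_(arb s) * 'I_n) with
  | inl (inl s) => @PAtom Sc arc _ s (fun j => (ord0, wid j))
  | inl (inr s) => match zcase (arc s) with
                   | inl e => @PAtom Sc arc _ s (fun j => @ordabs _ _ e j)
                   | inr _ => PBot _ _
                   end
  | inr (p, q) => PEq arc (ord0, p) (ord_max, q)
  end.

Definition eqJ : ppf arc (bool * 'I_n) :=
  bigAnd (fun k : 'I_n => PEq arc (false, k) (true, k)).

Definition J : interp C B.
Proof.
refine (@Interp _ _ _ _ C B n (PTop _ _) phiJ eqJ (fun x => x) _ _ _).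
- move=> b; exists b; done.
- move=> [[s|s]|[p q]] x _ /=; try done.
  destruct (zcase (arc s)) as [e|h]; simpl.
    split; last by move=> H; split=> //; eexists; exact: H.
    move=> [_ [t Ht]]; exact: (eq_ind _ (fun u => Defs.rel C s u) Ht _ (empty_fun e _ _)).
  split=> // [[e _]]; by rewrite e in h.
- move=> x y _ _; rewrite /eqJ sat_bigAnd /=; split.
    by move=> -> k.
  move=> H; exact: functional_extensionality.
Defined.

Lemma biB : pp_bi_interpretable B C.
Proof.
exists I, J; split.
- exists (PEq arc (inl (ord0, ord0)) (inr ord0)) => x y /=.
  rewrite /comp_dom /comp_map /= /id_dom /id_map.
  split; first by move=> H; do 2 split=> //.
  by move=> [_ [_ ->]].
- exists (bigAnd (fun i : 'I_n => @PAtom Sb arb _ (inr (ord0, i))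
           (sel2 (inl (i, ord0)) (inr ord0)))) => x y.
  rewrite sat_bigAnd /comp_dom /comp_map /= /id_dom /id_map /sel2 /=.
  split.
    move=> H; do 2 split=> //.
    by apply: functional_extensionality => i; rewrite H.
  by move=> [_ [_ <-]].
Qed.

End Constr.

Theorem mainTheorem16 (Sc : Type) (arc : Sc -> nat) (C : structure arc)
  (m : nat) (Hm : forall s : Sc, arc s <= m) :
  exists (Sb : Type) (arb : Sb -> nat) (B : structure arb),
    (forall s : Sb, arb s <= 2) /\
    pp_bi_interpretable B C /\
    (finite_sig Sc -> finite_sig Sb).
Proof.
exists (Sb Sc m), (@arb Sc m), (B C Hm); split; last split.
- by move=> [[s|s]|s].
- exact (biB C Hm).
- move=> [l Hl].
  exists (List.map (fun s => inl (inl s)) l ++ List.map (fun s => inl (inr s)) l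
          ++ List.map inr (enum {: 'I_m.+1 * 'I_m.+1}))%list.
  move=> [[s|s]|p]; apply/List.in_or_app.
    by left; apply: List.in_map.
  all: right; apply/List.in_or_app.
    by left; apply: List.in_map.
  right; apply: List.in_map.
  have : p \in enum {: 'I_m.+1 * 'I_m.+1} by rewrite mem_enum.
  elim: (enum _) => //= a s IH; rewrite inE => /orP [/eqP ->|/IH]; [left|right] => //.
Qed.
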